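(* Let $\tau$ be a typical Euclidean triangle and let $S_\tau=\langle s_1,s_2,s_3\rangle\subset \mathrm{O}(2)$ (see context). Then $S_\tau$ admits the finite presentation $\langle x_1,x_2,x_3 \mid x_1^2,\ x_2^2,\ x_3^2,\ (x_1x_2x_3)^2\rangle$, with the generator $x_i$ corresponding to $s_i$ for $i=1,2,3$.
   Context: A Euclidean triangle $\tau=A_1A_2A_3$ has edges $e_i=A_jA_k$ and interior angles $\alpha_i$ at $A_i$, $\{i,j,k\}=\{1,2,3\}$; it is typical if $\alpha_1,\alpha_2,\alpha_3$ are linearly independent over $\mathbb{Q}$. Let $r_i$ be the reflection of the plane across the line containing $e_i$, and let $s_i\in\mathrm{O}(2)$ be its linear part, i.e. the linear reflection across the line through the origin parallel to $e_i$. $S_\tau$ is the subgroup of $\mathrm{O}(2)$ generated by $s_1,s_2,s_3$. *)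

(* Defs.v *)
From Stdlib Require Import Reals List QArith Qreals.
Import ListNotations.
Open Scope R_scope.

Definition point := (R * R)%type.

Definition vsub (p q : point) : point := (fst p - fst q, snd p - snd q).
Definition dot (p q : point) : R := fst p * fst q + snd p * snd q.
Definition vnorm (p : point) : R := sqrt (dot p p).
Definition cross (p q : point) : R := fst p * snd q - snd p * fst q.

Inductive idx := I1 | I2 | I3.

Definition tri := idx -> point.

Definition nondegenerate (A : tri) : Prop :=
  cross (vsub (A I2) (A I1)) (vsub (A I3) (A I1)) <> 0.

Definition others (i : idx) : idx * idx :=
  match i with I1 => (I2, I3) | I2 => (I3, I1) | I3 => (I1, I2) end.

Definition angle (A : tri) (i : idx) : R :=
  let u := vsub (A (fst (others i))) (A i) in
  let v := vsub (A (snd (others i))) (A i) in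
  acos (dot u v / (vnorm u * vnorm v)).

Definition typical (A : tri) : Prop :=
  forall q1 q2 q3 : Q,
    Q2R q1 * angle A I1 + Q2R q2 * angle A I2 + Q2R q3 * angle A I3 = 0 ->
    Q2R q1 = 0 /\ Q2R q2 = 0 /\ Q2R q3 = 0.

Definition edge_dir (A : tri) (i : idx) : point :=
  vsub (A (snd (others i))) (A (fst (others i))).

Definition lin_refl (d : point) (v : point) : point :=
  let c := 2 * dot v d / dot d d in
  (c * fst d - fst v, c * snd d - snd v).

(* s_i in O(2): linear part of the reflection across the line containing e_i *)
Definition s (A : tri) (i : idx) : point -> point := lin_refl (edge_dir A i).

(* Words in the generators x_1, x_2, x_3 (each x_i is an involution in the
   presented group, so positive words suffice). *)
Definition word := list idx.

Definition eval (A : tri) (w : word) : point -> point :=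
  fold_right (fun i f => fun v => s A i (f v)) (fun v => v) w.

Definition relators : list word :=
  [ [I1; I1]; [I2; I2]; [I3; I3]; [I1; I2; I3; I1; I2; I3] ].

(* The congruence on words defining the group
   < x1, x2, x3 | x1^2, x2^2, x3^2, (x1 x2 x3)^2 >:
   equality of the images of two words in that group. *)
Inductive pres_eq : word -> word -> Prop :=
  | pres_refl w : pres_eq w w
  | pres_sym w1 w2 : pres_eq w1 w2 -> pres_eq w2 w1
  | pres_trans w1 w2 w3 : pres_eq w1 w2 -> pres_eq w2 w3 -> pres_eq w1 w3
  | pres_rel u r v : In r relators -> pres_eq (u ++ r ++ v) (u ++ v).

(* Main.v *)
Require Import Defs.
From Stdlib Require Import Reals List QArith Qreals Lra Lia Psatz ZArith FunctionalExtensionality.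
Import ListNotations.
Open Scope R_scope.


Definition rot (t : R) (x : point) : point :=
  (cos t * fst x - sin t * snd x, sin t * fst x + cos t * snd x).

Lemma key (P Q T x : point) (sg : R) :
  (sg = 1 /\ 0 < cross (vsub Q P) (vsub T P)) \/ (sg = -1 /\ cross (vsub Q P) (vsub T P) < 0) ->
  lin_refl (vsub P T) (lin_refl (vsub Q P) x) =
  rot (2 * sg * acos (dot (vsub Q P) (vsub T P) / (vnorm (vsub Q P) * vnorm (vsub T P)))) x.
Proof.
  destruct P as [px py], Q as [qx qy], T as [tx ty], x as [x1 x2].
  unfold vsub, vnorm, lin_refl, rot, dot, cross; simpl.
  set (ux := qx - px). set (uy := qy - py). set (vx := tx - px). set (vy := ty - py).
  replace (px - tx) with (- vx) by (unfold vx; ring).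
  replace (py - ty) with (- vy) by (unfold vy; ring).
  set (Nu := ux * ux + uy * uy). set (Nv := vx * vx + vy * vy).
  set (dt := ux * vx + uy * vy). set (cr := ux * vy - uy * vx).
  intro Hs.
  assert (Lag : dt * dt + cr * cr = Nu * Nv) by (unfold dt, cr, Nu, Nv; ring).
  assert (Hcr : cr * cr > 0) by (destruct Hs as [[_ H]|[_ H]]; nra).
  assert (HNu : Nu > 0).
  { assert (0 <= Nu) by (unfold Nu; nra). assert (0 <= Nv) by (unfold Nv; nra).
    destruct (Rle_lt_or_eq_dec 0 Nu H) as [h|h]; [lra|]. rewrite <- h in Lag. nra. }
  assert (HNv : Nv > 0).
  { assert (0 <= Nu) by (unfold Nu; nra). assert (0 <= Nv) by (unfold Nv; nra).
    destruct (Rle_lt_or_eq_dec 0 Nv H0) as [h|h]; [lra|]. rewrite <- h in Lag. nra. }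
  assert (sNu : sqrt Nu * sqrt Nu = Nu) by (apply sqrt_sqrt; lra).
  assert (sNv : sqrt Nv * sqrt Nv = Nv) by (apply sqrt_sqrt; lra).
  assert (pu : sqrt Nu > 0) by (apply sqrt_lt_R0; lra).
  assert (pv : sqrt Nv > 0) by (apply sqrt_lt_R0; lra).
  set (c := dt / (sqrt Nu * sqrt Nv)).
  assert (cc : c * c = dt * dt / (Nu * Nv)).
  { unfold c. transitivity (dt * dt / ((sqrt Nu * sqrt Nu) * (sqrt Nv * sqrt Nv))).
    field; lra. rewrite sNu, sNv; reflexivity. }
  assert (cc1 : c * c <= 1).
  { rewrite cc. apply (Rmult_le_reg_r (Nu * Nv)). nra.
    unfold Rdiv. rewrite Rmult_assoc, Rinv_l by nra. nra. }
  assert (cb : -1 <= c <= 1) by (split; nra).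
  assert (ca : cos (acos c) = c) by (apply cos_acos; exact cb).
  assert (sa : sin (acos c) = Rabs cr / (sqrt Nu * sqrt Nv)).
  { rewrite sin_acos by exact cb.
    replace (1 - c²) with ((Rabs cr / (sqrt Nu * sqrt Nv))²).
    - apply sqrt_Rsqr. unfold Rdiv; apply Rmult_le_pos; [apply Rabs_pos| left; apply Rinv_0_lt_compat; nra].
    - unfold Rsqr.
      replace (Rabs cr / (sqrt Nu * sqrt Nv) * (Rabs cr / (sqrt Nu * sqrt Nv)))
        with ((Rabs cr * Rabs cr) / ((sqrt Nu * sqrt Nu) * (sqrt Nv * sqrt Nv))) by (field; lra).
      rewrite <- Rabs_mult, Rabs_pos_eq by nra. rewrite sNu, sNv. rewrite cc.
      apply (Rmult_eq_reg_r (Nu * Nv)); [|nra].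
      field_simplify; try lra. }
  assert (c2 : cos (2 * acos c) = 2 * dt * dt / (Nu * Nv) - 1).
  { rewrite cos_2a_cos, ca. replace (2 * c * c) with (2 * (c*c)) by ring. rewrite cc. field. lra. }
  assert (s2 : sin (2 * acos c) = 2 * Rabs cr * dt / (Nu * Nv)).
  { rewrite sin_2a, ca, sa. unfold c.
    transitivity (2 * Rabs cr * dt / ((sqrt Nu * sqrt Nu) * (sqrt Nv * sqrt Nv))).
    field; lra. rewrite sNu, sNv; reflexivity. }
  destruct Hs as [[-> H]|[-> H]].
  - rewrite Rmult_1_r. fold c. rewrite c2, s2, Rabs_pos_eq by lra.
    f_equal; unfold dt, cr, Nu, Nv in *; field; repeat split; nra.
  - fold c. replace (2 * -1 * acos c) with (- (2 * acos c)) by ring.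
    rewrite cos_neg, sin_neg, c2, s2, Rabs_left by lra.
    f_equal; unfold dt, cr, Nu, Nv in *; field; repeat split; nra.
Qed.
Close Scope R_scope.

Notation "u ≡ v" := (pres_eq u v) (at level 70).

Lemma pcong p u v q : u ≡ v -> p ++ u ++ q ≡ p ++ v ++ q.
Proof.
  induction 1.
  - apply pres_refl.
  - now apply pres_sym.
  - eapply pres_trans; eauto.
  - replace (p ++ (u ++ r ++ v) ++ q) with ((p ++ u) ++ r ++ (v ++ q)) by (now rewrite !app_assoc).
    replace (p ++ (u ++ v) ++ q) with ((p ++ u) ++ (v ++ q)) by (now rewrite !app_assoc).
    now apply pres_rel.
Qed.

Lemma pcongl p u v : u ≡ v -> p ++ u ≡ p ++ v.
Proof. intro H. pose proof (pcong p u v [] H). now rewrite !app_nil_r in H0. Qed.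
Lemma pcongr u v q : u ≡ v -> u ++ q ≡ v ++ q.
Proof. intro H. exact (pcong [] u v q H). Qed.

Lemma psq i : [i; i] ≡ [].
Proof.
  pose proof (pres_rel [] [i;i] []) as H. simpl in H.
  apply H. destruct i; simpl; auto.
Qed.

Lemma pc : [I1;I2;I3;I1;I2;I3] ≡ [].
Proof.
  pose proof (pres_rel [] [I1;I2;I3;I1;I2;I3] []) as H. simpl in H. apply H. simpl; auto.
Qed.

Lemma pdel p i q : p ++ [i;i] ++ q ≡ p ++ q.
Proof. exact (pcong p _ _ q (psq i)). Qed.

Ltac ptrans x := apply pres_trans with x.

Lemma cinv : [I3;I2;I1] ≡ [I1;I2;I3].
Proof.
  ptrans ([I3;I2;I1] ++ [I1;I2;I3;I1;I2;I3] ++ []).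
  { apply pres_sym. pose proof (pcong [I3;I2;I1] _ _ [] pc). simpl in *. exact H. }
  simpl.
  ptrans ([I3;I2] ++ [I1;I1] ++ [I2;I3;I1;I2;I3]). apply pres_refl.
  eapply pres_trans. apply pdel. simpl.
  ptrans ([I3] ++ [I2;I2] ++ [I3;I1;I2;I3]). apply pres_refl.
  eapply pres_trans. apply pdel. simpl.
  ptrans ([] ++ [I3;I3] ++ [I1;I2;I3]). apply pres_refl.
  eapply pres_trans. apply pdel. apply pres_refl.
Qed.

Lemma dinv : [I2;I3;I1] ≡ [I1;I3;I2].
Proof.
  ptrans ([] ++ [I1;I1] ++ [I2;I3;I1]). apply pres_sym, pdel. simpl.
  ptrans ([I1] ++ [I3;I2;I1] ++ [I1]).
  { apply pres_sym. apply (pcong [I1] _ _ [I1] cinv). }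
  simpl. ptrans ([I1;I3;I2] ++ [I1;I1] ++ []). apply pres_refl.
  eapply pres_trans. apply pdel. apply pres_refl.
Qed.

Fixpoint rep (a : word) (k : nat) : word :=
  match k with O => [] | S k => rep a k ++ a end.

Definition Zpow (a a' : word) (m : Z) : word :=
  if Z.leb 0 m then rep a (Z.to_nat m) else rep a' (Z.to_nat (- m)).

Section Pow.
Variables a a' : word.
Hypothesis inv1 : a ++ a' ≡ [].
Hypothesis inv2 : a' ++ a ≡ [].

Lemma canc p q u v : u ++ v ≡ [] -> p ++ u ++ v ++ q ≡ p ++ q.
Proof. intro H. rewrite app_assoc with (l:=u). exact (pcong p _ _ q H). Qed.

Lemma Zpow_succ m : Zpow a a' m ++ a ≡ Zpow a a' (m + 1).
Proof.
  unfold Zpow. destruct (Z.leb_spec 0 m).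
  - rewrite (proj2 (Z.leb_le 0 (m+1))) by lia.
    replace (Z.to_nat (m+1)) with (S (Z.to_nat m)) by lia. apply pres_refl.
  - destruct (Z.leb_spec 0 (m+1)).
    + assert (m = -1)%Z by lia. subst. simpl. apply inv2.
    + replace (Z.to_nat (- m)) with (S (Z.to_nat (- (m+1)))) by lia. simpl.
      pose proof (canc (rep a' (Z.to_nat (- (m + 1)))) [] a' a inv2).
      rewrite !app_nil_r in H1. rewrite <- app_assoc. exact H1.
Qed.

Lemma Zpow_pred m : Zpow a a' m ++ a' ≡ Zpow a a' (m - 1).
Proof.
  unfold Zpow. destruct (Z.leb_spec 0 (m - 1)).
  - rewrite (proj2 (Z.leb_le 0 m)) by lia.
    replace (Z.to_nat m) with (S (Z.to_nat (m - 1))) by lia. simpl.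
    pose proof (canc (rep a (Z.to_nat (m - 1))) [] a a' inv1).
    rewrite !app_nil_r in H0. rewrite <- app_assoc. exact H0.
  - destruct (Z.leb_spec 0 m).
    + assert (m = 0)%Z by lia. subst. simpl. apply pres_refl.
    + replace (Z.to_nat (- (m - 1))) with (S (Z.to_nat (- m))) by lia. apply pres_refl.
Qed.

Lemma Zpow_add m n : Zpow a a' m ++ Zpow a a' n ≡ Zpow a a' (m + n).
Proof.
  revert m. induction n using Z.peano_ind; intro m.
  - unfold Zpow at 2. simpl. rewrite app_nil_r, Z.add_0_r. apply pres_refl.
  - ptrans (Zpow a a' m ++ Zpow a a' n ++ a).
    { apply pcongl. apply pres_sym. rewrite <- Z.add_1_r. apply Zpow_succ. }
    rewrite app_assoc. eapply pres_trans. apply pcongr. apply IHn.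
    replace (m + Z.succ n)%Z with (m + n + 1)%Z by lia. apply Zpow_succ.
  - ptrans (Zpow a a' m ++ Zpow a a' n ++ a').
    { apply pcongl. apply pres_sym. rewrite <- Z.sub_1_r. apply Zpow_pred. }
    rewrite app_assoc. eapply pres_trans. apply pcongr. apply IHn.
    replace (m + Z.pred n)%Z with (m + n - 1)%Z by lia. apply Zpow_pred.
Qed.

Lemma rep_comm a0 x b k : x ++ a0 ≡ b ++ x -> x ++ rep a0 k ≡ rep b k ++ x.
Proof.
  intro H. induction k; simpl.
  - rewrite app_nil_r. apply pres_refl.
  - rewrite app_assoc. eapply pres_trans. apply pcongr. apply IHk.
    rewrite <- !app_assoc. apply pcongl. exact H.
Qed.

Lemma Zpow_flip x : x ++ a ≡ a' ++ x -> x ++ a' ≡ a ++ x ->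
  forall m, x ++ Zpow a a' m ≡ Zpow a a' (- m) ++ x.
Proof.
  intros H1 H2 m. unfold Zpow. destruct (Z.leb_spec 0 m), (Z.leb_spec 0 (-m)).
  - assert (m = 0)%Z by lia. subst. simpl. rewrite app_nil_r. apply pres_refl.
  - rewrite Z.opp_involutive. apply rep_comm. exact H1.
  - apply rep_comm. exact H2.
  - lia.
Qed.

Lemma Zpow_comm x : x ++ a ≡ a ++ x -> x ++ a' ≡ a' ++ x ->
  forall m, x ++ Zpow a a' m ≡ Zpow a a' m ++ x.
Proof.
  intros H1 H2 m. unfold Zpow. destruct (Z.leb_spec 0 m); apply rep_comm; auto.
Qed.
End Pow.

Definition wA := [I1;I2]. Definition wA' := [I2;I1].
Definition wB := [I2;I3]. Definition wB' := [I3;I2].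
Definition tail (p : bool) : word := if p then [I2] else [].
Definition NF (m n : Z) (p : bool) : word := Zpow wA wA' m ++ Zpow wB wB' n ++ tail p.

Fixpoint phi (w : word) : Z * Z * bool :=
  match w with
  | [] => (0%Z, 0%Z, false)
  | i :: w => let '(m, n, p) := phi w in
     match i with
     | I1 => ((1 - m)%Z, (- n)%Z, negb p)
     | I2 => ((- m)%Z, (- n)%Z, negb p)
     | I3 => ((- m)%Z, (-1 - n)%Z, negb p)
     end
  end.

Lemma del_mid (p q : word) i : p ++ i :: i :: q ≡ p ++ q.
Proof. exact (pdel p i q). Qed.


Lemma AA' : wA ++ wA' ≡ [].
Proof. eapply pres_trans. exact (del_mid [I1] [I1] I2). apply psq. Qed.
Lemma A'A : wA' ++ wA ≡ [].
Proof. eapply pres_trans. exact (del_mid [I2] [I2] I1). apply psq. Qed.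
Lemma BB' : wB ++ wB' ≡ [].
Proof. eapply pres_trans. exact (del_mid [I2] [I2] I3). apply psq. Qed.
Lemma B'B : wB' ++ wB ≡ [].
Proof. eapply pres_trans. exact (del_mid [I3] [I3] I2). apply psq. Qed.

Lemma flipA m : [I2] ++ Zpow wA wA' m ≡ Zpow wA wA' (- m) ++ [I2].
Proof.
  apply (Zpow_flip wA wA'). apply pres_refl.
  eapply pres_trans. exact (del_mid [] [I1] I2).
  apply pres_sym. exact (del_mid [I1] [] I2).
Qed.
Lemma flipB n : [I2] ++ Zpow wB wB' n ≡ Zpow wB wB' (- n) ++ [I2].
Proof.
  apply (Zpow_flip wB wB').
  eapply pres_trans. exact (del_mid [] [I3] I2).
  apply pres_sym. exact (del_mid [I3] [] I2).
  apply pres_refl.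
Qed.
Lemma commB' m : wB' ++ Zpow wA wA' m ≡ Zpow wA wA' m ++ wB'.
Proof.
  apply (Zpow_comm wA wA').
  - exact (pcongr _ _ [I2] cinv).
  - eapply pres_trans. exact (del_mid [I3] [I1] I2).
    eapply pres_trans. apply pres_sym. exact (del_mid [] [I3;I1] I2).
    exact (pcongl [I2] _ _ dinv).
Qed.

Lemma tailP p : [I2] ++ tail p ≡ tail (negb p).
Proof. destruct p; simpl. apply psq. apply pres_refl. Qed.

Lemma step2 m n p : [I2] ++ NF m n p ≡ NF (- m) (- n) (negb p).
Proof.
  unfold NF. rewrite app_assoc. eapply pres_trans. apply pcongr. apply flipA.
  rewrite <- !app_assoc. apply pcongl. rewrite app_assoc.
  eapply pres_trans. apply pcongr. apply flipB.
  rewrite <- !app_assoc. apply pcongl. apply tailP.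
Qed.

Lemma step1 m n p : [I1] ++ NF m n p ≡ NF (1 - m) (- n) (negb p).
Proof.
  ptrans (wA ++ [I2] ++ NF m n p).
  { apply pres_sym. exact (del_mid [I1] _ I2). }
  eapply pres_trans. apply pcongl. apply step2.
  unfold NF. rewrite app_assoc. apply pcongr.
  replace (1 - m)%Z with (1 + - m)%Z by lia.
  change wA with (Zpow wA wA' 1). apply (Zpow_add wA wA' AA' A'A).
Qed.

Lemma step3 m n p : [I3] ++ NF m n p ≡ NF (- m) (-1 - n) (negb p).
Proof.
  ptrans (wB' ++ [I2] ++ NF m n p).
  { apply pres_sym. exact (del_mid [I3] _ I2). }
  eapply pres_trans. apply pcongl. apply step2.
  unfold NF. rewrite app_assoc. eapply pres_trans. apply pcongr. apply commB'.
  rewrite <- !app_assoc. apply pcongl. rewrite app_assoc. apply pcongr.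
  replace (-1 - n)%Z with (-1 + - n)%Z by lia.
  change wB' with (Zpow wB wB' (-1)). apply (Zpow_add wB wB' BB' B'B).
Qed.

Lemma nf_ok w : w ≡ (let '(m, n, p) := phi w in NF m n p).
Proof.
  induction w as [|i w IH].
  - apply pres_refl.
  - simpl. destruct (phi w) as [[m n] p].
    change (i :: w) with ([i] ++ w).
    eapply pres_trans. apply pcongl. exact IH.
    destruct i; [apply step1|apply step2|apply step3].
Qed.
Open Scope R_scope.

Lemma refl_invol d x : dot d d <> 0 -> lin_refl d (lin_refl d x) = x.
Proof.
  destruct d as [a b], x as [p q]. unfold lin_refl, dot; simpl. intro H.
  f_equal; field; auto.
Qed.

Lemma refl_rot d t x : dot d d <> 0 -> lin_refl d (rot t x) = rot (- t) (lin_refl d x).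
Proof.
  destruct d as [a b], x as [p q]. unfold lin_refl, rot, dot; simpl. intro H.
  rewrite cos_neg, sin_neg. f_equal; field; auto.
Qed.

Lemma rot_rot a b x : rot a (rot b x) = rot (a + b) x.
Proof.
  destruct x as [p q]. unfold rot; simpl. rewrite cos_plus, sin_plus. f_equal; ring.
Qed.

Lemma rot0 x : rot 0 x = x.
Proof. destruct x; unfold rot; simpl. rewrite cos_0, sin_0. f_equal; ring. Qed.

Lemma eval_app A u v x : eval A (u ++ v) x = eval A u (eval A v x).
Proof. induction u; simpl; congruence. Qed.

Lemma eval_cons A i w x : eval A (i :: w) x = s A i (eval A w x).
Proof. reflexivity. Qed.

Lemma cross_cyc (P Q T : point) : cross (vsub Q P) (vsub T P) = cross (vsub T Q) (vsub P Q).
Proof. destruct P, Q, T; unfold cross, vsub; simpl; ring. Qed.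

Lemma nz_of_cross (P Q T : point) : cross (vsub Q P) (vsub T P) <> 0 ->
  dot (vsub Q P) (vsub Q P) <> 0.
Proof.
  destruct P as [a b], Q as [c d], T as [e f]; unfold cross, dot, vsub; simpl. intros H H0.
  destruct (Rplus_sqr_eq_0 _ _ H0) as [H1 H2]. apply H.
  replace c with a by lra. replace d with b by lra. ring.
Qed.

Lemma dot_opp (P Q : point) : dot (vsub P Q) (vsub P Q) = dot (vsub Q P) (vsub Q P).
Proof. destruct P, Q; unfold dot, vsub; simpl; ring. Qed.

Definition Dv (A : tri) := cross (vsub (A I2) (A I1)) (vsub (A I3) (A I1)).
Definition sg A := if Rlt_dec 0 (Dv A) then 1 else -1.

Lemma sg_spec A : nondegenerate A -> (sg A = 1 /\ 0 < Dv A) \/ (sg A = -1 /\ Dv A < 0).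
Proof.
  unfold nondegenerate, sg. fold (Dv A). intro H.
  destruct (Rlt_dec 0 (Dv A)); [left|right]; split; auto; lra.
Qed.

Ltac pts A := destruct (A I1) as [a1 b1], (A I2) as [a2 b2], (A I3) as [a3 b3].

Lemma nz A i : nondegenerate A -> dot (edge_dir A i) (edge_dir A i) <> 0.
Proof.
  unfold nondegenerate, edge_dir; intro HD; destruct i; simpl.
  - apply nz_of_cross with (T := A I1). intro E; apply HD; rewrite <- E.
    pts A; unfold cross, vsub; simpl; ring.
  - apply nz_of_cross with (T := A I2). intro E; apply HD; rewrite <- E.
    pts A; unfold cross, vsub; simpl; ring.
  - apply nz_of_cross with (T := A I3). exact HD.
Qed.

Definition aA A := 2 * sg A * angle A I3.
Definition aB A := 2 * sg A * angle A I1.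
Definition aC A := 2 * sg A * angle A I2.

Lemma G12 A x : nondegenerate A -> s A I1 (s A I2 x) = rot (aA A) x.
Proof.
  intro HD. unfold s, edge_dir, aA, angle; simpl. apply key.
  replace (cross (vsub (A I1) (A I3)) (vsub (A I2) (A I3))) with (Dv A).
  apply sg_spec; auto. unfold Dv; pts A; unfold cross, vsub; simpl; ring.
Qed.
Lemma G23 A x : nondegenerate A -> s A I2 (s A I3 x) = rot (aB A) x.
Proof.
  intro HD. unfold s, edge_dir, aB, angle; simpl. apply key.
  apply sg_spec; auto.
Qed.
Lemma G31 A x : nondegenerate A -> s A I3 (s A I1 x) = rot (aC A) x.
Proof.
  intro HD. unfold s, edge_dir, aC, angle; simpl. apply key.
  replace (cross (vsub (A I3) (A I2)) (vsub (A I1) (A I2))) with (Dv A).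
  apply sg_spec; auto. unfold Dv; pts A; unfold cross, vsub; simpl; ring.
Qed.

Lemma sinv A i x : nondegenerate A -> s A i (s A i x) = x.
Proof. intro H. apply refl_invol, nz, H. Qed.
Lemma srot A i t x : nondegenerate A -> s A i (rot t x) = rot (- t) (s A i x).
Proof. intro H. apply refl_rot, nz, H. Qed.

Lemma s1_eq A x : nondegenerate A -> s A I1 x = rot (aA A) (s A I2 x).
Proof. intro H. rewrite <- G12 by auto. rewrite sinv by auto. reflexivity. Qed.
Lemma s3_eq A x : nondegenerate A -> s A I3 x = rot (- aB A) (s A I2 x).
Proof. intro H. rewrite <- srot, <- G23, sinv by auto. reflexivity. Qed.

Definition Rmap A (q : Z * Z * bool) (x : point) : point :=
  let '(m, n, p) := q in
  rot (IZR m * aA A + IZR n * aB A) (if p then s A I2 x else x).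

Lemma eval_R A w x : nondegenerate A -> eval A w x = Rmap A (phi w) x.
Proof.
  intro H. induction w as [|i w IH].
  - simpl. replace (0 * aA A + 0 * aB A) with 0 by ring. rewrite rot0. reflexivity.
  - rewrite eval_cons, IH. cbn [phi]. destruct (phi w) as [[m n] p]. unfold Rmap.
    assert (E : s A I2 (if p then s A I2 x else x) = if negb p then s A I2 x else x).
    { destruct p; simpl; auto. apply sinv; auto. }
    destruct i.
    + rewrite s1_eq, srot, E, rot_rot by auto. f_equal.
      rewrite minus_IZR, opp_IZR. ring.
    + rewrite srot, E by auto. f_equal. rewrite !opp_IZR. ring.
    + rewrite s3_eq, srot, E, rot_rot by auto. f_equal.
      rewrite minus_IZR, opp_IZR. ring.
Qed.

Lemma eval_rel A r x : nondegenerate A -> In r relators -> eval A r x = x.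
Proof.
  intros H Hr. simpl in Hr.
  destruct Hr as [<-|[<-|[<-|[<-|[]]]]]; simpl; try (apply sinv; auto).
  rewrite (G12 A (s A I3 (s A I1 (s A I2 (s A I3 x))))) by auto.
  rewrite G12 by auto. rewrite srot, sinv, rot_rot by auto.
  replace (aA A + - aA A) with 0 by ring. apply rot0.
Qed.

Lemma sum_rel A : nondegenerate A -> sin (aA A + aB A + aC A) = 0.
Proof.
  intro H.
  assert (E : rot (aA A) (rot (aB A) (rot (aC A) (1, 0))) = (1, 0)).
  { rewrite <- G31, <- G23, <- G12, !sinv by auto. reflexivity. }
  rewrite !rot_rot in E. unfold rot in E; simpl in E. injection E. intros. lra.
Qed.

Lemma rot_inj t u : (forall x, rot t x = rot u x) -> sin (t - u) = 0.
Proof.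
  intro H. specialize (H (1, 0)). unfold rot in H; simpl in H. injection H; intros.
  rewrite sin_minus. replace (cos t) with (cos u) by lra. replace (sin t) with (sin u) by lra. ring.
Qed.

Lemma refl_not_rot d w : dot d d <> 0 -> (forall y, lin_refl d y = rot w y) -> False.
Proof.
  destruct d as [a b]. intros Hn H.
  pose proof (H (a, b)) as E1. pose proof (H (- b, a)) as E2.
  unfold lin_refl, rot, dot in *; simpl in *.
  replace (2 * (a * a + b * b) / (a * a + b * b)) with 2 in E1 by (field; auto).
  replace (2 * (- b * a + a * b) / (a * a + b * b)) with 0 in E2 by (field; auto).
  injection E1; injection E2; intros.
  apply Hn. assert (a = 0) by lra. assert (b = 0) by lra. subst. ring.
Qed.

Lemma parity_mis A t u : nondegenerate A -> (forall x, rot t (s A I2 x) = rot u x) -> False.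
Proof.
  intros HD H. apply (refl_not_rot (edge_dir A I2) (- t + u)). apply nz, HD.
  intro y. fold (s A I2 y). rewrite <- rot_rot, <- H, rot_rot.
  replace (- t + t) with 0 by ring. symmetry; apply rot0.
Qed.

Lemma Q2R_Z z : Q2R (inject_Z z) = IZR z.
Proof. unfold Q2R, inject_Z; simpl. rewrite Rinv_1. ring. Qed.

Lemma arith A m1 n1 m2 n2 : nondegenerate A -> typical A ->
  sin ((IZR m1 * aA A + IZR n1 * aB A) - (IZR m2 * aA A + IZR n2 * aB A)) = 0 ->
  m1 = m2 /\ n1 = n2.
Proof.
  intros HD HT Hs.
  destruct (sin_eq_0_0 _ (sum_rel A HD)) as [k' Hk'].
  destruct (sin_eq_0_0 _ Hs) as [k Hk].
  assert (Hsg : sg A = 1 \/ sg A = -1) by (destruct (sg_spec A HD) as [[h _]|[h _]]; auto).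
  assert (Hsg0 : 2 * sg A <> 0) by (destruct Hsg as [h|h]; rewrite h; lra).
  unfold aA, aB, aC in *.
  set (a1 := angle A I1) in *. set (a2 := angle A I2) in *. set (a3 := angle A I3) in *.
  destruct (Z.eq_dec k' 0) as [->|Hk0].
  - exfalso. assert (S0 : a1 + a2 + a3 = 0).
    { apply (Rmult_eq_reg_l (2 * sg A)); auto. rewrite Rmult_0_r.
      transitivity (2 * sg A * a3 + 2 * sg A * a1 + 2 * sg A * a2). ring. rewrite Hk'. ring. }
    destruct (HT (inject_Z 1) (inject_Z 1) (inject_Z 1)) as [h _].
    rewrite !Q2R_Z. fold a1 a2 a3. lra. rewrite Q2R_Z in h. lra.
  - set (dm := (m1 - m2)%Z). set (dn := (n1 - n2)%Z).
    assert (X0 : IZR (k' * dn - k) * a1 + IZR (- k) * a2 + IZR (k' * dm - k) * a3 = 0).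
    { apply (Rmult_eq_reg_l (2 * sg A)); auto. rewrite Rmult_0_r.
      unfold dm, dn. rewrite !minus_IZR, !mult_IZR, !minus_IZR, opp_IZR.
      transitivity (IZR k' * ((IZR m1 * (2 * sg A * a3) + IZR n1 * (2 * sg A * a1)) -
                      (IZR m2 * (2 * sg A * a3) + IZR n2 * (2 * sg A * a1)))
                    - IZR k * (2 * sg A * a3 + 2 * sg A * a1 + 2 * sg A * a2)). ring.
      rewrite Hk, Hk'. ring. }
    destruct (HT (inject_Z (k' * dn - k)) (inject_Z (- k)) (inject_Z (k' * dm - k))) as [h1 [h2 h3]].
    { rewrite !Q2R_Z. fold a1 a2 a3. exact X0. }
    rewrite Q2R_Z in h1, h2, h3. apply eq_IZR in h1, h2, h3.
    unfold dm, dn in *. split; nia.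
Qed.

Theorem proposition3p4 (A : tri) :
  nondegenerate A -> typical A ->
  forall w1 w2 : word, eval A w1 = eval A w2 <-> pres_eq w1 w2.
Proof.
  intros HD HT w1 w2. split.
  - intro E.
    assert (P : forall x, Rmap A (phi w1) x = Rmap A (phi w2) x).
    { intro x. rewrite <- !eval_R by auto. rewrite E. reflexivity. }
    pose proof (nf_ok w1) as N1. pose proof (nf_ok w2) as N2.
    destruct (phi w1) as [[m1 n1] p1], (phi w2) as [[m2 n2] p2].
    simpl in P.
    assert (Hp : p1 = p2).
    { destruct p1, p2; auto; exfalso.
      - eapply parity_mis; eauto.
      - eapply parity_mis; eauto. }
    subst p2.
    assert (P' : forall x, rot (IZR m1 * aA A + IZR n1 * aB A) x = rot (IZR m2 * aA A + IZR n2 * aB A) x).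
    { intro x. destruct p1.
      - rewrite <- (sinv A I2 x HD). apply P.
      - apply P. }
    destruct (arith A m1 n1 m2 n2 HD HT (rot_inj _ _ P')) as [-> ->].
    eapply pres_trans. exact N1. apply pres_sym. exact N2.
  - induction 1.
    + reflexivity.
    + auto.
    + congruence.
    + extensionality x. rewrite !eval_app. rewrite (eval_rel A r). reflexivity. auto. auto.
Qed.
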